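(* Let $G=(V,E)$ be a finite loopless graph with $V\neq\emptyset$, with edge weights $\mathbf{v}=(v_e)_{e\in E}$, and let $q_1,q_2$ be indeterminates. Then \[ Z_G(q_2,\mathbf{v})=\sum_{\pi\in\Pi(V)}(q_2/q_1)^{\underline{|\pi|}}\prod_{B\in\pi}Z_{G[B]}(q_1,\mathbf{v}), \] equivalently \[ Z_G(q_2,\mathbf{v})=\sum_{\pi\in\Pi(V)}\Bigl(\prod_{j=0}^{|\pi|-1}(q_2-jq_1)\Bigr)\prod_{B\in\pi}\widehat{Z}_{G[B]}(q_1,\mathbf{v}), \] or \[ \widehat{Z}_G(q_2,\mathbf{v})=\sum_{\pi\in\Pi(V)}\Bigl(\prod_{j=1}^{|\pi|-1}(q_2-jq_1)\Bigr)\prod_{B\in\pi}\widehat{Z}_{G[B]}(q_1,\mathbf{v}). \]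
   Context: $Z_H(q,\mathbf{v})=\sum_{A\subseteq E(H)}q^{k(A)}\prod_{e\in A}v_e$ is the multivariate Tutte polynomial of a finite graph $H$, where $k(A)$ is the number of connected components of $(V(H),A)$, and $\widehat{Z}_H(q,\mathbf{v})=\sum_{A\subseteq E(H)}q^{k(A)-1}\prod_{e\in A}v_e$ (a polynomial, for $V(H)\ne\emptyset$). $\Pi(V)$ is the set of unordered partitions of $V$ into nonempty blocks, $|\pi|$ is the number of blocks, and $G[B]$ is the induced subgraph on $B$. For an element $r$, $r^{\underline{k}}=r(r-1)\cdots(r-k+1)$ is the falling factorial; the first identity is read in the field of rational functions in $q_1,q_2,\mathbf{v}$ (equivalently, with $q_2=rq_1$ and $r$ an indeterminate). *)

(* Defs.v *)
From HB Require Import structures.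
From mathcomp Require Import all_boot all_order all_algebra.
Set Implicit Arguments. Unset Strict Implicit. Unset Printing Implicit Defensive.
Import Order.TTheory GRing.Theory Num.Theory.
Local Open Scope ring_scope.

(* A finite multigraph: vertex type V, edge type E, each edge e has
   endpoints src e and tgt e (loopless means src e != tgt e). *)
Section Tutte.
Variables (V E : finType) (src tgt : E -> V).

Definition adjE (A : {set E}) : rel V :=
  fun x y => [exists e in A, ((src e == x) && (tgt e == y)) ||
                             ((src e == y) && (tgt e == x))].

Definition inducedE (B : {set V}) : {set E} :=
  [set e | (src e \in B) && (tgt e \in B)].

Definition ncomp (B : {set V}) (A : {set E}) : nat :=
  #|[set [set y in B | connect (adjE A) x y] | x in B]|.

Variable R : comRingType.

Definition tutteZ (B : {set V}) (q : R) (v : E -> R) : R :=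
  \sum_(A : {set E} | A \subset inducedE B)
     q ^+ ncomp B A * \prod_(e in A) v e.

Definition tutteZhat (B : {set V}) (q : R) (v : E -> R) : R :=
  \sum_(A : {set E} | A \subset inducedE B)
     q ^+ (ncomp B A).-1 * \prod_(e in A) v e.

End Tutte.

Definition falling (R : ringType) (r : R) (k : nat) : R :=
  \prod_(j < k) (r - j%:R).

(* Main.v *)
Require Import Defs.
From HB Require Import structures.
From mathcomp Require Import all_boot all_order all_algebra.
From mathcomp Require Import ring.
Set Implicit Arguments. Unset Strict Implicit. Unset Printing Implicit Defensive.
Import Order.TTheory GRing.Theory Num.Theory.
Local Open Scope ring_scope.


Lemma connect_restr (T : finType) (e e' : rel T) (a : pred T) :
  (forall x y, x \in a -> e x y -> e' x y /\ y \in a) ->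
  forall x y, x \in a -> connect e x y -> connect e' x y /\ y \in a.
Proof.
move=> H x y ax /connectP [p pth ->]; elim: p x ax pth => [|z p IH] x ax /=.
  by rewrite connect0.
case/andP=> exz pth; have [e'xz az] := H _ _ ax exz.
have [c1 c2] := IH _ az pth.
by split=> //; exact: connect_trans (connect1 e'xz) c1.
Qed.

Section Graph.
Variables (V E : finType) (src tgt : E -> V).
Local Notation adj := (adjE src tgt).
Local Notation EI := (inducedE src tgt).

Lemma adj_sym A : symmetric (adj A).
Proof.
move=> x y; apply/existsP/existsP => -[e /andP[eA h]]; exists e;
  by rewrite eA /= orbC.
Qed.

Lemma adjP (A : {set E}) x y : reflect (exists2 e, e \in A &
   ((src e == x) && (tgt e == y)) || ((src e == y) && (tgt e == x))) (adj A x y).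
Proof.
apply: (iffP existsP) => [[e /andP[eA h]]|[e eA h]]; first by exists e.
by exists e; rewrite eA.
Qed.

Lemma connect_eqrel (A : {set E}) (D : {set V}) : {in D & &, equivalence_rel (connect (adj A))}.
Proof.
have cs := sym_connect_sym (adj_sym A).
move=> x y z _ _ _; split; first exact: connect0.
move=> cxy; apply/idP/idP => h.
  by apply: connect_trans h; rewrite cs.
exact: connect_trans cxy h.
Qed.

Definition comps (S : {set V}) (A : {set E}) :=
  equivalence_partition (connect (adj A)) S.

Lemma ncompE S A : ncomp src tgt S A = #|comps S A|.
Proof. by []. Qed.

Lemma comps_part S A : partition (comps S A) S.
Proof. exact: (equivalence_partitionP (@connect_eqrel A S)). Qed.

Lemma ncomp_gt0 S A : S != set0 -> (0 < ncomp src tgt S A)%N.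
Proof.
case/set0Pn => x xS; rewrite ncompE card_gt0; apply/set0Pn.
exists (pblock (comps S A) x); apply: pblock_mem.
by rewrite (cover_partition (comps_part S A)).
Qed.

Lemma ncomp0 A : ncomp src tgt set0 A = 0%N.
Proof. by rewrite ncompE; apply/eqP; rewrite cards_eq0 -partition_set0 comps_part. Qed.


Lemma adj_sub (A A' : {set E}) : A' \subset A -> subrel (adj A') (adj A).
Proof.
move=> sA x y /adjP[e eA h]; apply/adjP; exists e => //; exact: (subsetP sA).
Qed.

Lemma connect_mono (A A' : {set E}) x y : A' \subset A ->
  connect (adj A') x y -> connect (adj A) x y.
Proof.
move=> sA; apply: connect_sub => u w h; apply: connect1; exact: adj_sub h.
Qed.

Section Comps.
Variables (S : {set V}) (A : {set E}).
Hypothesis AS : A \subset EI S.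
Local Notation C := (comps S A).

Lemma C_part : partition C S. Proof. exact: comps_part. Qed.

Lemma pblockC x y : x \in S -> y \in S ->
  (y \in pblock C x) = connect (adj A) x y.
Proof. exact: (pblock_equivalence_partition (@connect_eqrel A S)). Qed.

Lemma pblockC_mem x : x \in S -> pblock C x \in C.
Proof. by move=> xS; apply: pblock_mem; rewrite (cover_partition C_part). Qed.

Lemma pblockC_sub x : x \in S -> pblock C x \subset S.
Proof. by move=> xS; apply: (partitionS C_part); apply: pblockC_mem. Qed.

Lemma pblockC_self x : x \in S -> x \in pblock C x.
Proof. by move=> xS; rewrite mem_pblock (cover_partition C_part). Qed.

Lemma C_eq_pblock c x : c \in C -> x \in c -> c = pblock C x.
Proof. by move=> cC xc; rewrite (def_pblock (partition_trivIset C_part) cC xc). Qed.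

Lemma C_sub c : c \in C -> c \subset S.
Proof. exact: (partitionS C_part). Qed.

Lemma C_ne0 c : c \in C -> exists x, x \in c.
Proof. by move=> cC; apply/set0Pn; exact: (partition_neq0 C_part cC). Qed.

Lemma edge_pblock e : e \in A -> src e \in S /\ tgt e \in S /\
   pblock C (src e) = pblock C (tgt e).
Proof.
move=> eA; have := subsetP AS e eA; rewrite inE => /andP[sS tS].
do 2 split => //.
apply: (same_pblock (partition_trivIset C_part)).
rewrite pblockC // connect1 //; apply/adjP; exists e; rewrite ?eqxx ?orbT //.
Qed.

Definition Qs (B : {set V}) := A \subset EI B :|: EI (S :\: B).

Lemma Qs_closed (B : {set V}) : Qs B -> forall x y, x \in B -> adj A x y ->
  adj (A :&: EI B) x y /\ y \in B.
Proof.
move=> QB x y xB /adjP[e eA h]; have := subsetP QB e eA.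
rewrite !inE => /orP[/andP[sB tB]|/andP[/andP[sB sS] /andP[tB tS]]].
  split; last by case/orP: h => /andP[/eqP ex /eqP ey]; subst.
  by apply/adjP; exists e => //; rewrite !inE eA sB tB.
by exfalso; case/orP: h => /andP[/eqP ex /eqP ey]; subst;
   [rewrite xB in sB | rewrite xB in tB].
Qed.

Lemma compsQ (B : {set V}) : B \subset S -> Qs B ->
  comps B (A :&: EI B) = [set c in C | c \subset B].
Proof.
move=> BS QB.
have cl := connect_restr (Qs_closed QB).
have eqc x y : x \in B -> y \in B ->
   connect (adj (A :&: EI B)) x y = connect (adj A) x y.
  move=> xB yB; apply/idP/idP => h; last by case: (cl _ _ xB h).
  by apply: connect_mono h; exact: subsetIl.
have defp x : x \in B -> [set y in B | connect (adj (A :&: EI B)) x y] = pblock C x.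
  move=> xB; have xS := subsetP BS x xB; apply/setP => y; rewrite inE.
  apply/andP/idP => [[yB h]|h].
    by rewrite pblockC ?(subsetP BS) // -eqc.
  have yS := subsetP (pblockC_sub xS) y h.
  rewrite pblockC // in h; have [_ yB] := cl _ _ xB h.
  by rewrite yB eqc.
have psub x : x \in B -> pblock C x \subset B.
  move=> xB; rewrite -defp //; apply/subsetP=> y; rewrite inE; by case/andP.
apply/setP => c; rewrite inE; apply/imsetP/andP => [[x xB ->]|[cC cB]].
  rewrite defp //; split; [exact: pblockC_mem (subsetP BS x xB)|exact: psub].
have [x xc] := C_ne0 cC; exists x; first exact: subsetP cB x xc.
by rewrite defp ?(C_eq_pblock cC xc) //; exact: subsetP cB x xc.
Qed.


Lemma C_uniq c d y : c \in C -> d \in C -> y \in c -> y \in d -> c = d.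
Proof. by move=> cC dC yc yd; rewrite (C_eq_pblock cC yc) (C_eq_pblock dC yd). Qed.

Lemma cover_sub (T : {set {set V}}) : T \subset C -> cover T \subset S.
Proof.
move=> TC; apply/bigcupsP => c cT; exact: C_sub (subsetP TC c cT).
Qed.

Lemma in_coverC (T : {set {set V}}) c y : T \subset C -> c \in C ->
   y \in c -> (y \in cover T) = (c \in T).
Proof.
move=> TC cC yc; apply/bigcupP/idP => [[d dT yd]|cT]; last by exists c.
by rewrite (C_uniq cC (subsetP TC d dT) yc yd).
Qed.

Lemma sel_cover (T : {set {set V}}) : T \subset C ->
  [set c in C | c \subset cover T] = T.
Proof.
move=> TC; apply/setP => c; rewrite inE; apply/andP/idP => [[cC cT]|cT].
  have [x xc] := C_ne0 cC; by rewrite -(in_coverC TC cC xc) (subsetP cT).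
by split; [exact: subsetP TC c cT | exact: bigcup_sup].
Qed.

Lemma sel_coverC (T : {set {set V}}) : T \subset C ->
  [set c in C | c \subset S :\: cover T] = C :\: T.
Proof.
move=> TC; apply/setP => c; rewrite !inE; apply/andP/andP => [[cC cT]|[cT cC]].
  split => //; have [x xc] := C_ne0 cC; have := subsetP cT x xc.
  by rewrite inE (in_coverC TC cC xc) => /andP[].
split => //; apply/subsetP => y yc; rewrite inE (in_coverC TC cC yc) cT /=.
exact: subsetP (C_sub cC) y yc.
Qed.

Lemma Qs_cover (T : {set {set V}}) : T \subset C -> Qs (cover T).
Proof.
move=> TC; apply/subsetP => e eA; have [sS [tS pe]] := edge_pblock eA.
have ps := pblockC_mem sS; have pt := pblockC_mem tS.
have hs := in_coverC TC ps (pblockC_self sS).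
have ht := in_coverC TC pt (pblockC_self tS).
rewrite -pe in ht; rewrite !inE sS tS /= hs ht.
by case: (pblock C (src e) \in T).
Qed.

Lemma Qs_compl (B : {set V}) : B \subset S -> Qs B -> Qs (S :\: B).
Proof.
move=> BS QB; rewrite /Qs; have -> : S :\: (S :\: B) = B.
  apply/setP => x; rewrite !inE; case xB: (x \in B); last by rewrite /=; case: (x \in S).
  by rewrite (subsetP BS x xB).
by rewrite setUC.
Qed.

Lemma Qs_pblock (B : {set V}) x : B \subset S -> Qs B -> x \in B ->
   pblock C x \subset B.
Proof.
move=> BS QB xB; have xS := subsetP BS x xB.
apply/subsetP => y yp.
have yS := subsetP (pblockC_sub xS) y yp.
rewrite pblockC // in yp.
by have [_ ->] := connect_restr (Qs_closed QB) xB yp.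
Qed.

Lemma Qs_coverE (B : {set V}) : B \subset S -> Qs B ->
   cover [set c in C | c \subset B] = B.
Proof.
move=> BS QB; apply/setP => x; apply/bigcupP/idP => [[c]|xB].
  by rewrite inE => /andP[_ cB] xc; exact: subsetP cB x xc.
have xS := subsetP BS x xB.
exists (pblock C x); last exact: pblockC_self.
rewrite inE pblockC_mem //=; apply/subsetP => y yp.
have yS := subsetP (pblockC_sub xS) y yp.
rewrite pblockC // in yp.
by have [_ ->] := connect_restr (Qs_closed QB) xB yp.
Qed.

End Comps.
End Graph.


Section Alg.
Variable R : comRingType.

Lemma setUI_split (T : finType) (Y Z X1 X2 : {set T}) : [disjoint Y & Z] ->
  X1 \subset Y -> X2 \subset Z -> (X1 :|: X2) :&: Y = X1 /\ (X1 :|: X2) :&: Z = X2.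
Proof.
move=> dYZ s1 s2; split; apply/setP => x; rewrite !inE;
  case x1: (x \in X1); case x2: (x \in X2) => //=;
  have := subsetP s1 x; have := subsetP s2 x; rewrite x1 x2 => h2 h1.
all: try by [rewrite (h1 isT) | rewrite (h2 isT) | rewrite (disjointFl dYZ (h2 isT))
   | rewrite (disjointFr dYZ (h1 isT))].
Qed.

Lemma sum_subsetU (T : finType) (Y Z : {set T}) (F : {set T} -> {set T} -> R) :
  [disjoint Y & Z] ->
  \sum_(X1 : {set T} | X1 \subset Y) \sum_(X2 : {set T} | X2 \subset Z) F X1 X2 =
  \sum_(X : {set T} | X \subset Y :|: Z) F (X :&: Y) (X :&: Z).
Proof.
move=> dYZ; rewrite pair_big /=.
rewrite (reindex_onto (fun p : {set T} * {set T} => p.1 :|: p.2)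
                      (fun X => (X :&: Y, X :&: Z))) /=; last first.
  by move=> X sX; rewrite -setIUr; apply/setIidPl.
apply: eq_big => [[X1 X2]|[X1 X2]] /=.
  apply/idP/andP => [/andP[s1 s2]|[_ /eqP[<- <-]]]; last by rewrite !subsetIr.
  have [-> ->] := setUI_split dYZ s1 s2; rewrite eqxx.
  by split => //; apply: setUSS.
by case/andP=> s1 s2; have [-> ->] := setUI_split dYZ s1 s2.
Qed.

Lemma sum_subsetU' (T : finType) (Y Z : {set T}) (f : {set T} -> R) :
  [disjoint Y & Z] ->
  \sum_(X : {set T} | X \subset Y :|: Z) f X =
  \sum_(X1 : {set T} | X1 \subset Y) \sum_(X2 : {set T} | X2 \subset Z) f (X1 :|: X2).
Proof.
move=> dYZ; rewrite (sum_subsetU (fun X1 X2 => f (X1 :|: X2))) //.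
by apply: eq_bigr => X sX; rewrite -setIUr (setIidPl sX).
Qed.

Lemma sum_binom (T : finType) (D : {set T}) (a b : R) :
  \sum_(X : {set T} | X \subset D) a ^+ #|X| * b ^+ #|D :\: X| = (a + b) ^+ #|D|.
Proof.
move: {2}#|D| (erefl #|D|) => n; elim: n D => [|n IH] D cD.
  move/eqP: cD; rewrite cards_eq0 => /eqP ->.
  rewrite (eq_bigl (fun X => X == set0)) => [|X]; last by rewrite subset0.
  by rewrite big_pred1_eq cards0 set0D cards0 !expr0 mulr1.
have : D != set0 by rewrite -card_gt0 cD.
case/set0Pn => x xD.
have defD : D = [set x] :|: (D :\ x) by rewrite setD1K.
have dx : [disjoint [set x] & D :\ x].
  by rewrite disjoint_sym disjoints_subset; apply/subsetP=> y; rewrite !inE => /andP[].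
have cD' : #|D :\ x| = n by move: cD; rewrite (cardsD1 x) xD add1n => -[].
rewrite cD defD sum_subsetU' //.
rewrite (eq_bigl (fun X => X \in [set set0; [set x]])); last first.
  by move=> X; rewrite -powerset1 powersetE.
rewrite big_setU1 ?big_set1 /=; last first.
  by rewrite inE eq_sym; apply/eqP => /setP /(_ x); rewrite !inE eqxx.
rewrite exprS -cD' -(IH _ cD') mulrDl !big_distrr /= addrC; congr (_ + _).
  apply: eq_bigr => X sX.
  have xX : x \notin X by apply/negP => /(subsetP sX); rewrite !inE eqxx.
  rewrite cardsU1 xX add1n exprS -mulrA; congr (_ * (_ * _)).
  congr (_ ^+ _); apply: eq_card => y; rewrite !inE.
  by case: (eqVneq y x) => [->|]; rewrite ?(negbTE xX) ?andbF.
apply: eq_bigr => X sX; rewrite set0U.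
have -> : (x |: D :\ x) :\: X = x |: ((D :\ x) :\: X).
  apply/setP => y; rewrite !inE; case: (eqVneq y x) => [->|//].
  by have := subsetP sX x; rewrite !inE eqxx /= => /contraNN ->.
by rewrite cardsU1 !inE eqxx /= andbF /= add1n exprS mulrCA.
Qed.

End Alg.


Section Core.
Variables (V E : finType) (src tgt : E -> V) (R : comRingType).
Local Notation EI := (inducedE src tgt).
Local Notation ncomp := (ncomp src tgt).

Lemma core (S : {set V}) (A : {set E}) x0 (a b : R) : A \subset EI S -> x0 \in S ->
  \sum_(B : {set V} | (x0 \in B) && (B \subset S) && Qs src tgt S A B)
     a ^+ (ncomp B (A :&: EI B)).-1 * (b - a) ^+ ncomp (S :\: B) (A :&: EI (S :\: B))
  = b ^+ (ncomp S A).-1.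
Proof.
move=> AS x0S.
set C := comps src tgt S A; set c0 := pblock C x0.
have c0C : c0 \in C by exact: pblockC_mem.
rewrite (reindex_onto (fun T => cover (c0 |: T))
          (fun B => [set c in C | c \subset B] :\ c0)) /=; last first.
  move=> B /andP[/andP[x0B BS] QB]; rewrite setD1K ?(Qs_coverE BS QB) //.
  by rewrite inE c0C; exact: Qs_pblock.
have TCs (T : {set {set V}}) : T \subset C :\ c0 -> c0 |: T \subset C /\ c0 \notin T.
  move=> TC'; split.
    apply/subsetP=> c; rewrite !inE => /orP[/eqP->|cT] //.
    by have := subsetP TC' c cT; rewrite !inE => /andP[].
  by apply/negP => /(subsetP TC'); rewrite !inE eqxx.
have hP (T : {set {set V}}) (X : {set V}) :
    [set c in C | c \subset X] :\ c0 == T -> T \subset C :\ c0.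
  by move/eqP <-; apply: setSD; apply/subsetP=> c; rewrite inE; case/andP.
transitivity (\sum_(T : {set {set V}} | T \subset C :\ c0)
    a ^+ #|T| * (b - a) ^+ #|(C :\ c0) :\: T|).
  apply: eq_big => T.
    apply/idP/idP.
      by case/andP => _ /hP.
    move=> TC'; have [TC c0T] := TCs T TC'.
    rewrite (sel_cover TC) setU1K // eqxx andbT (Qs_cover AS TC) (cover_sub TC) andbT.
    by rewrite andbT; apply/bigcupP; exists c0; [rewrite setU11 | exact: pblockC_self].
  move=> /andP[_ /hP TC']; have [TC c0T] := TCs T TC'.
  have cS := cover_sub TC; have QT := Qs_cover AS TC.
  rewrite !ncompE (compsQ cS QT) (compsQ (subsetDl S _) (Qs_compl cS QT)).
  by rewrite (sel_cover TC) (sel_coverC TC) cardsU1 c0T add1n /= -setDDl.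
rewrite sum_binom addrC subrK ncompE (cardsD1 c0 C) c0C.
by [].
Qed.

Lemma EI_sub (B S : {set V}) : B \subset S -> EI B \subset EI S.
Proof.
move=> BS; apply/subsetP => e; rewrite !inE => /andP[sB tB].
by rewrite (subsetP BS _ sB) (subsetP BS _ tB).
Qed.

Lemma F2 (S : {set V}) x0 (a b : R) (v : E -> R) : x0 \in S ->
  tutteZhat src tgt S b v =
  \sum_(B : {set V} | (x0 \in B) && (B \subset S))
     tutteZhat src tgt B a v * tutteZ src tgt (S :\: B) (b - a) v.
Proof.
move=> x0S.
have step (B : {set V}) : B \subset S ->
  tutteZhat src tgt B a v * tutteZ src tgt (S :\: B) (b - a) v =
  \sum_(A : {set E} | A \subset EI S)
    (if Qs src tgt S A B then a ^+ (ncomp B (A :&: EI B)).-1 *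
        (b - a) ^+ ncomp (S :\: B) (A :&: EI (S :\: B)) else 0)
    * \prod_(e in A) v e.
  move=> BS; rewrite /tutteZhat /tutteZ big_distrlr /=.
  have dE : [disjoint EI B & EI (S :\: B)].
    rewrite -setI_eq0; apply/eqP/setP => e; rewrite !inE.
    by case: (src e \in B); rewrite ?andbF.
  rewrite (sum_subsetU (fun A1 A2 => (a ^+ (ncomp B A1).-1 * \prod_(e in A1) v e) *
     ((b - a) ^+ ncomp (S :\: B) A2 * \prod_(e in A2) v e)) dE).
  rewrite [RHS](bigID (fun A => Qs src tgt S A B)) /=.
  rewrite [X in _ = _ + X]big1 ?addr0; last by move=> A /andP[_ /negbTE ->]; rewrite mul0r.
  apply: eq_big => A.
    apply/idP/idP => [h|/andP[]//]; rewrite /Qs h andbT.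
    apply: subset_trans h _; apply/subsetP => e; rewrite inE => /orP[].
      by apply/subsetP; apply: EI_sub.
    by apply/subsetP; apply: EI_sub; apply: subsetDl.
  move=> QA; rewrite /Qs QA.
  rewrite [in RHS](big_setID (EI B)) /=.
  have -> : A :\: EI B = A :&: EI (S :\: B).
    apply/setP => e; rewrite !inE; have := subsetP QA e; rewrite !inE.
    by case: (e \in A); case: (src e \in B); case: (tgt e \in B); rewrite ?andbF //= => ->.
  by rewrite mulrACA.
rewrite (eq_bigr _ (fun B hB => step B (proj2 (andP hB)))).
rewrite exchange_big /= /tutteZhat; apply: eq_bigr => A AS.
rewrite -big_distrl /= -big_mkcondr core //.
Qed.

End Core.


Section Part.
Variable R : comRingType.

Lemma part_decomp (T : finType) (S : {set T}) x0 (F : {set {set T}} -> R) :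
  x0 \in S ->
  \sum_(P : {set {set T}} | partition P S) F P =
  \sum_(B : {set T} | (x0 \in B) && (B \subset S))
     \sum_(P : {set {set T}} | partition P (S :\: B)) F (B |: P).
Proof.
move=> x0S.
rewrite (partition_big (fun P => pblock P x0)
           (fun B => (x0 \in B) && (B \subset S))) /=; last first.
  move=> P pP; have cP := cover_partition pP.
  rewrite mem_pblock cP x0S /=; apply: (partitionS pP).
  by apply: pblock_mem; rewrite cP.
apply: eq_bigr => B /andP[x0B BS].
rewrite (reindex_onto (fun P => B |: P) (fun P => P :\ B)) /=; last first.
  move=> P /andP[pP /eqP <-]; rewrite setD1K //; apply: pblock_mem.
  by rewrite (cover_partition pP).
have defS : B :|: (S :\: B) = S.
  apply/setP => y; rewrite !inE; case yB: (y \in B) => //=.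
  by rewrite (subsetP BS y yB).
have BnP P : partition P (S :\: B) -> B \notin P.
  move=> pP; apply/negP => /(partitionS pP) /subsetP /(_ x0 x0B).
  by rewrite inE x0B.
apply: eq_bigl => P; apply/idP/idP.
  case/andP => /andP [pP _] /eqP e; rewrite -e.
  by apply: partitionD1 pP (setU11 _ _).
move=> pP; have nB := BnP P pP; rewrite setU1K // eqxx andbT.
have pU : partition (B |: P) S.
  have B0 : B != set0 by apply/set0Pn; exists x0.
  have dB : [disjoint B & S :\: B].
    rewrite -setI_eq0; apply/eqP/setP => y; rewrite !inE.
    by case: (y \in B); rewrite ?andbF.
  by have := partitionU1 pP B0 dB; rewrite defS.
by rewrite pU /= (def_pblock (partition_trivIset pU) (setU11 _ _) x0B) eqxx.
Qed.

End Part.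

Section Main.
Variables (V E : finType) (src tgt : E -> V) (R : comRingType) (v : E -> R) (q1 : R).
Local Notation Zs S q := (tutteZ src tgt S q v).
Local Notation Zh S q := (tutteZhat src tgt S q v).

Definition c2 m q := \prod_(j < m) (q - j%:R * q1).
Definition c3 m q := \prod_(1 <= j < m) (q - j%:R * q1).

Lemma c3S m q : c3 m.+1 q = c2 m (q - q1).
Proof.
rewrite /c3 /c2 big_add1 /= big_mkord; apply: eq_bigr => i _.
rewrite -addn1 natrD; ring.
Qed.

Lemma c2S m q : c2 m.+1 q = q * c3 m.+1 q.
Proof.
rewrite /c2 /c3 big_ord_recl big_add1 /= big_mkord mul0r subr0.
congr (_ * _); apply: eq_bigr => i _; by rewrite /bump leq0n add1n.
Qed.

Lemma Zs_hat S q : S != set0 -> Zs S q = q * Zh S q.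
Proof.
move=> Sn0; rewrite /tutteZ /tutteZhat big_distrr; apply: eq_bigr => A _.
by rewrite /= mulrA -exprS prednK // ncomp_gt0.
Qed.

Lemma Zs0 q : Zs set0 q = 1.
Proof.
rewrite /tutteZ (eq_bigl (fun A => A == set0)) => [|A].
  by rewrite big_pred1_eq ncomp0 big_set0 mulr1.
have -> : inducedE src tgt set0 = set0 by apply/setP => e; rewrite !inE.
by rewrite subset0.
Qed.

Lemma main_ind n : forall S : {set V}, #|S| = n -> forall q,
  Zs S q = \sum_(P : {set {set V}} | partition P S) c2 #|P| q * \prod_(B in P) Zh B q1
  /\ (S != set0 ->
  Zh S q = \sum_(P : {set {set V}} | partition P S) c3 #|P| q * \prod_(B in P) Zh B q1).
Proof.
elim/ltn_ind: n => n IH S cS q.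
have [->|Sn0] := eqVneq S set0.
  split; last by move=> /eqP.
  rewrite Zs0 (eq_bigl (fun P => P == set0)) => [|P]; last by rewrite partition_set0.
  by rewrite big_pred1_eq cards0 /c2 big_ord0 big_set0 mulr1.
have hat : Zh S q = \sum_(P : {set {set V}} | partition P S) c3 #|P| q * \prod_(B in P) Zh B q1.
  have [x0 x0S] := set0Pn _ Sn0.
  rewrite (@F2 V E src tgt R S x0 q1 q v x0S) (part_decomp _ x0S); apply: eq_bigr => B /andP[x0B BS].
  have ltS : (#|S :\: B| < n)%N.
    rewrite -cS; apply: proper_card; rewrite properE subsetDl /=.
    by apply/subsetPn; exists x0 => //; rewrite inE x0B.
  have [-> _] := IH _ ltS (S :\: B) erefl (q - q1).
  rewrite big_distrr /=; apply: eq_bigr => P pP.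
  have nB : B \notin P.
    apply/negP => /(partitionS pP) /subsetP /(_ x0 x0B).
    by rewrite inE x0B.
  by rewrite cardsU1 nB add1n c3S big_setU1 //= mulrCA.
split; last by move=> _; exact: hat.
rewrite Zs_hat // hat big_distrr; apply: eq_bigr => P pP /=.
case cP : #|P| => [|m].
  move/eqP: cP; rewrite cards_eq0 => /eqP P0; move: pP; rewrite P0.
  by move=> /cover_partition; rewrite /cover big_set0 => S0; rewrite -S0 eqxx in Sn0.
by rewrite c2S mulrA.
Qed.

End Main.

Unset Implicit Arguments. Set Strict Implicit.


Theorem proposition3p4 (R : fieldType) (V E : finType) (src tgt : E -> V)
    (loopless : forall e : E, src e != tgt e)
    (Vne : (0 < #|V|)%N)
    (v : E -> R) (q1 q2 : R) :
  (q1 != 0 ->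
     tutteZ src tgt [set: V] q2 v =
     \sum_(P : {set {set V}} | partition P [set: V])
        falling (q2 / q1) #|P| * \prod_(B in P) tutteZ src tgt B q1 v)
  /\
  tutteZ src tgt [set: V] q2 v =
     \sum_(P : {set {set V}} | partition P [set: V])
        (\prod_(j < #|P|) (q2 - j%:R * q1)) *
        \prod_(B in P) tutteZhat src tgt B q1 v
  /\
  tutteZhat src tgt [set: V] q2 v =
     \sum_(P : {set {set V}} | partition P [set: V])
        (\prod_(1 <= j < #|P|) (q2 - j%:R * q1)) *
        \prod_(B in P) tutteZhat src tgt B q1 v.
Proof.
have Tn0 : [set: V] != set0 by rewrite -card_gt0 cardsT.
have [H2 H3] := main_ind src tgt v q1 (erefl #|[set: V]|) q2.
have H3' := H3 Tn0.
split; last by split.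
move=> q1n0; rewrite H2; apply: eq_bigr => P pP.
rewrite /c2 /falling.
have -> : \prod_(B in P) tutteZ src tgt B q1 v =
          q1 ^+ #|P| * \prod_(B in P) tutteZhat src tgt B q1 v.
  rewrite -prodrMl; apply: eq_bigr => B BP; apply: Zs_hat.
  exact: partition_neq0 pP BP.
rewrite mulrA; congr (_ * _).
have -> : q1 ^+ #|P| = \prod_(j < #|P|) q1.
  by rewrite prodr_const card_ord.
rewrite -big_split; apply: eq_bigr => j _ /=.
by rewrite mulrBl divfK.
Qed.
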